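(* Let $I\subseteq R$ be a good ideal. Suppose $\mathbb N^n$ is the disjoint union of finitely many cones $C_1,\dots,C_r$ such that $I_a=I_b$ whenever $a,b$ lie in the same cone $C_j$. Let $L$ be the maximum, over $j$, of the sum of the coordinates of the vertex of $C_j$, and assume that every zero-dimensional cone $C_j$ has vertex coordinate sum strictly less than $L$. Then $I^k$ is Ratliff--Rush (i.e. $\widetilde{I^k}=I^k$) for every integer $k\ge L+1$.
   Context: Let $\mathbb K$ be a field, $R=\mathbb K[x_1,\dots,x_n]$, $\mathfrak m=\langle x_1,\dots,x_n\rangle$, $\mathbb N=\{0,1,2,\dots\}$. A monomial $x_1^{\alpha_1}\cdots x_n^{\alpha_n}$ is identified with the point $(\alpha_1,\dots,\alpha_n)\in\mathbb N^n$. For a monomial ideal $I$, $G(I)$ denotes its (unique) minimal monomial generating set. If $I$ is an $\mathfrak m$-primary monomial ideal, then for each $i$ there is a unique $d_i\ge1$ with $x_i^{d_i}\in G(I)$; write $\mu_i=x_i^{d_i}$. For $(a_1,\dots,a_n)\in\mathbb N^n$ the box associated to $I$ is $B_{a_1,\dots,a_n}=([a_1d_1,(a_1+1)d_1]\times\cdots\times[a_nd_n,(a_n+1)d_n])\cap\mathbb N^n$; a monomial belongs to a box if its exponent vector does. An $\mathfrak m$-primary monomial ideal $I$ is called good if for every integer $l\ge1$, every element of $G(I^l)$ belongs to some box $B_{a_1,\dots,a_n}$ with $a_1+\dots+a_n=l-1$. For a good ideal $I$ and $a=(a_1,\dots,a_n)\in\mathbb N^n$, with $l=a_1+\dots+a_n+1$,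 define $I_{a}=I_{a_1,\dots,a_n}=\left\langle \frac{m}{\mu_1^{a_1}\cdots\mu_n^{a_n}} : m\in B_{a_1,\dots,a_n}\cap G(I^l)\right\rangle$. For $v\in\mathbb N^n$ and $S\subseteq\{1,\dots,n\}$, the cone with vertex $v$ and set of fixed coordinates $S$ is $\{c\in\mathbb N^n : c_i=v_i \text{ for } i\in S,\ c_i\ge v_i \text{ for } i\notin S\}$; its dimension is $n-|S|$. The Ratliff--Rush closure of a regular ideal $J$ is $\tilde J=\bigcup_{k\ge0}(J^{k+1}:J^k)$, and $J$ is Ratliff--Rush if $J=\tilde J$. *)

(* Defs.v *)
(* Monomial ideals of K[x_1..x_n] modelled by their sets of
   exponent vectors. *)
From mathcomp Require Import all_boot.
Set Implicit Arguments. Unset Strict Implicit. Unset Printing Implicit Defensive.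

Definition Mon (n : nat) := {ffun 'I_n -> nat}.

Definition madd n (a b : Mon n) : Mon n := [ffun i => a i + b i].
Definition mle n (a b : Mon n) : Prop := forall i, a i <= b i.
Definition msum n (a : Mon n) : nat := \sum_(i < n) a i.
Definition pure n (i : 'I_n) (e : nat) : Mon n := [ffun j => if j == i then e else 0].
Definition mone n : Mon n := [ffun => 0].

Definition monideal n (I : Mon n -> Prop) : Prop :=
  forall a b, I a -> mle a b -> I b.

Definition mingen n (I : Mon n -> Prop) (m : Mon n) : Prop :=
  I m /\ forall m', I m' -> mle m' m -> m' = m.

Definition mprimary n (I : Mon n -> Prop) : Prop :=
  monideal I /\ ~ I (mone n) /\ forall i : 'I_n, exists e, I (pure i e).

Definition mprod n (A B : Mon n -> Prop) : Mon n -> Prop :=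
  fun m => exists a b, A a /\ B b /\ mle (madd a b) m.
Fixpoint mpow n (I : Mon n -> Prop) (k : nat) : Mon n -> Prop :=
  match k with
  | 0 => fun _ => True
  | k'.+1 => mprod I (mpow I k')
  end.

Definition box n (d : 'I_n -> nat) (a m : Mon n) : Prop :=
  forall i, a i * d i <= m i <= (a i).+1 * d i.

Definition good n (I : Mon n -> Prop) (d : 'I_n -> nat) : Prop :=
  forall l, 0 < l -> forall m, mingen (mpow I l) m ->
    exists a : Mon n, msum a = l.-1 /\ box d a m.

(* the ideal I_a : generated by m / (mu_1^{a_1} ... mu_n^{a_n}) for
   m in B_a ∩ G(I^l), l = |a| + 1 *)
Definition Iideal n (I : Mon n -> Prop) (d : 'I_n -> nat) (a : Mon n) : Mon n -> Prop :=
  fun c => exists m, box d a m /\ mingen (mpow I (msum a).+1) m /\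
    mle [ffun i => m i - a i * d i] c.

Definition cone n (v : Mon n) (S : {set 'I_n}) (c : Mon n) : Prop :=
  forall i, (i \in S -> c i = v i) /\ (i \notin S -> v i <= c i).

Definition mcolon n (A B : Mon n -> Prop) : Mon n -> Prop :=
  fun m => forall b, B b -> A (madd m b).

Definition rrclosure n (J : Mon n -> Prop) : Mon n -> Prop :=
  fun m => exists k, mcolon (mpow J k.+1) (mpow J k) m.

Definition ratliffRush n (J : Mon n -> Prop) : Prop :=
  forall m, rrclosure J m <-> J m.

(* Main.v *)
Require Import Defs.
From mathcomp Require Import all_boot zify.
From Stdlib Require Import Classical.
Set Implicit Arguments. Unset Strict Implicit. Unset Printing Implicit Defensive.

Section H.
Variable n : nat.
Implicit Types (a b c : Mon n).

Lemma mle_refl a : mle a a. Proof. by move=> i. Qed.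
Lemma mle_trans a b c : mle a b -> mle b c -> mle a c.
Proof. by move=> h1 h2 i; apply: leq_trans (h1 i) (h2 i). Qed.

Lemma msum_le a b : mle a b -> msum a <= msum b.
Proof. by move=> h; apply: leq_sum => i _; apply: h. Qed.

Lemma msum_eq a b : mle a b -> msum a = msum b -> a = b.
Proof.
move=> h e; apply/ffunP => i.
have H0 : \sum_(j < n) (b j - a j) = 0.
  by rewrite sumnB; [rewrite /msum in e; rewrite e subnn | move=> j _; apply: h].
move/eqP: H0; rewrite sum_nat_eq0 => /forallP /(_ i) /=; rewrite subn_eq0 => hb.
by apply/eqP; rewrite eqn_leq h hb.
Qed.

Lemma msum_lt a b : mle a b -> a <> b -> msum a < msum b.
Proof.
move=> h ne; rewrite ltn_neqAle msum_le // andbT; apply/eqP => e; exact: ne (msum_eq h e).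
Qed.

Lemma mingen_exists (P : Mon n -> Prop) y : P y -> exists g, mingen P g /\ mle g y.
Proof.
move: {2}(msum y) (leqnn (msum y)) => s; elim: s y => [|s IH] y hs Py;
 (case: (classic (forall m', P m' -> mle m' y -> m' = y)) => [H|H];
  [by exists y; split; [split | exact: mle_refl]|]);
 have [m' Hm'] := not_all_ex_not _ _ H;
 (have [Pm' [hm' ne]] : P m' /\ mle m' y /\ m' <> y by
  split; [|split] => //; apply: NNPP => C; apply: Hm' => ? ?; [|]; tauto);
 have lt := msum_lt hm' ne.
  by move: (leq_trans lt hs).
have [g [Hg hg]] := IH m' (leq_trans lt hs) Pm'.
by exists g; split=> //; apply: mle_trans hg hm'.
Qed.
End H.

Section P.
Variable n : nat.
Variable I : Mon n -> Prop.
Hypothesis hmon : monideal I.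

Lemma monideal_pow p : monideal (mpow I p).
Proof.
case: p => [//|p] a b [x [y [Ix [Iy h]]]] hab.
by exists x, y; split=> //; split=> //; apply: mle_trans h hab.
Qed.

Lemma madd_le_r (a b : Mon n) : mle b (madd a b).
Proof. by move=> i; rewrite ffunE leq_addl. Qed.

Lemma pow_succ_sub p z : mpow I p.+1 z -> mpow I p z.
Proof.
move=> [x [y [Ix [Iy h]]]]; apply: (monideal_pow Iy).
by apply: mle_trans h; apply: madd_le_r.
Qed.

Lemma pow_anti p q z : p <= q -> mpow I q z -> mpow I p z.
Proof.
move=> /subnK <-; elim: (q - p) z => [|s IH] z; first by rewrite add0n.
by rewrite addSn => /pow_succ_sub /IH.
Qed.

Lemma prod_pow p q z : mprod (mpow I p) (mpow I q) z -> mpow I (p + q) z.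
Proof.
elim: p z => [|p IH] z [a [b [Ha [Hb h]]]].
  by rewrite add0n; apply: (monideal_pow Hb); apply: mle_trans h; apply: madd_le_r.
case: Ha => [a1 [a2 [Ia1 [Ia2 h1]]]].
rewrite addSn; exists a1, (madd a2 b); split=> //; split.
  by apply: IH; exists a2, b; split=> //; split=> //; apply: mle_refl.
move=> i; move: (h1 i) (h i); rewrite !ffunE => e1 e2; lia.
Qed.

Lemma powpow k s z : mpow (mpow I k) s z -> mpow I (k * s) z.
Proof.
elim: s z => [|s IH] z; first by rewrite muln0.
move=> [a [b [Ha [Hb h]]]]; rewrite mulnS; apply: prod_pow.
by exists a, b; split=> //; split=> //; apply: IH.
Qed.
End P.

Lemma pow_pure n (A : Mon n -> Prop) i e t : A (pure i e) -> mpow A t (pure i (t * e)).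
Proof.
move=> hA; elim: t => [|t IH] //=.
exists (pure i e), (pure i (t * e)); split=> //; split=> // j.
rewrite !ffunE; case: (j == i) => //; rewrite mulSn //.
Qed.

Lemma mu_pow n (I : Mon n -> Prop) (d : 'I_n -> nat) :
  (forall i, I (pure i (d i))) ->
  forall s (c : Mon n), msum c = s -> mpow I s [ffun j => c j * d j].
Proof.
move=> hd; elim=> [|s IH] c hc //=.
have [j hj] : exists j, 0 < c j.
  case: (boolP [exists j, 0 < c j]) => [/existsP [j0 hj0]|/existsPn H].
    by exists j0.
  move: hc; rewrite /msum big1 // => i _; by move: (H i); rewrite lt0n negbK => /eqP.
have hc' : msum [ffun l => c l - (l == j)] = s.
  have : msum c = msum [ffun l => c l - (l == j)] + 1.
    rewrite /msum (bigD1 j) //= [in RHS](bigD1 j) //= !ffunE eqxx.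
    rewrite -addnA [_ + 1]addnC addnA subnK //; congr (_ + _).
    by apply: eq_bigr => l /negbTE; rewrite ffunE => ->; rewrite subn0.
  by rewrite hc addn1 => [[]].
exists (pure j (d j)), [ffun l => [ffun l => c l - (l == j)] l * d l]; split=> //; split.
  exact: IH.
move=> l; rewrite !ffunE; case: eqP => [->|_]; last by rewrite subn0 add0n.
by rewrite -{1}(mul1n (d j)) -mulnDl subnKC.
Qed.

Unset Implicit Arguments.

Theorem mainTheorem17 (n : nat) (I : Mon n -> Prop) (d : 'I_n -> nat)
  (hI : mprimary I)
  (hd : forall i : 'I_n, mingen I (pure i (d i)))
  (hgood : good I d)
  (r : nat) (v : 'I_r -> Mon n) (S : 'I_r -> {set 'I_n})
  (hpart : forall c : Mon n, exists! j : 'I_r, cone (v j) (S j) c)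
  (hconst : forall (j : 'I_r) (a b : Mon n), cone (v j) (S j) a -> cone (v j) (S j) b ->
              forall c, Iideal I d a c <-> Iideal I d b c)
  (hzero : forall j : 'I_r, #|S j| = n ->
              msum (v j) < \max_(j' < r) msum (v j')) :
  forall k : nat, (\max_(j < r) msum (v j)).+1 <= k -> ratliffRush (mpow I k).
Proof.
have [hmon [hprop hpure]] := hI.
have hdI : forall i, I (pure i (d i)) by move=> i; case: (hd i).
have dpos : forall i, 0 < d i.
  move=> i; rewrite lt0n; apply/negP => /eqP e; apply: hprop.
  have -> : mone n = pure i (d i) by apply/ffunP => j; rewrite !ffunE e; case: (_ == _).
  exact: hdI.
move=> k hk m; split; last first.
  move=> Jm; exists 0 => b _ /=; exists m, b; split=> //; split=> //; exact: mle_refl.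
case=> t Ht.
set L := \max_(j < r) msum (v j) in hk hzero.
have kpos : 0 < k by apply: leq_trans hk.
set M : Mon n := [ffun j => m j %/ d j].
have hMd : mle [ffun j => M j * d j] m by move=> j; rewrite !ffunE leq_divM.
have [hbig|hsmall] := leqP k (msum M).
  apply: (monideal_pow (p:=k) _ hMd).
  by apply: (pow_anti hbig); exact: mu_pow.
pose Mb (i : 'I_n) : Mon n := [ffun j => M j + (if j == i then t * k else 0)].
have test : forall i : 'I_n, k.-1 <= msum M /\
   (msum M = k.-1 -> Iideal I d (Mb i) [ffun j => m j - M j * d j]).
  move=> i.
  set b := pure i (t * (k * d i)).
  have Jb : mpow (mpow I k) t b by apply: pow_pure; apply: pow_pure (hdI i).
  have Hy := powpow (Ht b Jb).
  have [g [[Hg Hmin] hgy]] := mingen_exists Hy.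
  have kt : 0 < k * t.+1 by rewrite muln_gt0 kpos.
  have [a [ha hbox]] := hgood (k * t.+1) kt g (conj Hg Hmin).
  have hy : forall j, madd m b j = m j + (if j == i then t * (k * d i) else 0).
    by move=> j; rewrite !ffunE.
  have haMb : mle a (Mb i).
    move=> j; rewrite !ffunE; have := hbox j; have := hgy j; rewrite hy.
    case: eqP => [->|_] hgj /andP[h1 _]; have h2 := leq_trans h1 hgj.
      by rewrite -(leq_divRL _ _ (dpos i)) mulnA addnC divnMDl // addnC in h2.
    by rewrite addn0 in h2; rewrite addn0 leq_divRL.
  have sMb : msum (Mb i) = msum M + t * k.
    rewrite /msum (eq_bigr (fun j => M j + (if j == i then t * k else 0))); last first.
      by move=> j _; rewrite ffunE.
    rewrite big_split /=; congr (_ + _).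
    rewrite (bigD1 i) //= eqxx big1 ?addn0 // => j /negbTE ->. done.
  have hle := msum_le haMb.
  have h1 : k.-1 <= msum M.
    move: hle; rewrite sMb ha (mulnC t k); rewrite mulnS; lia.
  split=> // eM.
  have aMb : a = Mb i.
    apply: (msum_eq haMb); rewrite sMb ha eM mulnS (mulnC t k); lia.
  exists g; rewrite -aMb; split=> //; split.
    rewrite ha prednK ?muln_gt0 ?kpos //; exact: (conj Hg Hmin).
  move=> j; rewrite aMb !ffunE; have := hgy j; rewrite hy.
  case: eqP => [->|_] hgj.
    rewrite mulnDl (mulnC t k) -mulnA (mulnC t (k * d i)) in hgj *. lia.
  rewrite addn0 in hgj; rewrite addn0; lia.
have [j0 [hj0 _]] := hpart M.
case: (boolP [exists i, i \notin S j0]) => [/existsP [i hi]|/existsPn hall].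
  have [h1 h2] := test i.
  have eM : msum M = k.-1 by lia.
  have cMb : cone (v j0) (S j0) (Mb i).
    move=> l; have [e1 e2] := hj0 l; rewrite [Mb i l]ffunE; split.
      move=> hl; case: eqP => [el|_]; first by move: hi; rewrite -el hl.
      by rewrite addn0 (e1 hl).
    by move=> hl; apply: leq_trans (e2 hl) (leq_addr _ _).
  have [g' [hb [[Hg' _] hle]]] := (hconst j0 M (Mb i) hj0 cMb _).2 (h2 eM).
  rewrite eM prednK // in Hg'.
  apply: (monideal_pow (p:=k) Hg') => j.
  have := hb j; have := hle j; have := hMd j; rewrite !ffunE => e1 e2 /andP[e3 _].
  lia.
have allS : forall l, l \in S j0 by move=> l; move: (hall l); rewrite negbK.
have eMv : msum M = msum (v j0).
  by apply: eq_bigr => l _; have [e1 _] := hj0 l; apply: e1.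
have cardS : #|S j0| = n.
  have -> : S j0 = setT by apply/setP => l; rewrite inE allS.
  by rewrite cardsT card_ord.
have lt := hzero j0 cardS.
case: (posnP n) => [n0|npos].
  have z : forall (c : Mon n), msum c = 0.
    move=> c; apply: big1 => -[l hl] _; exfalso; move: (hl); rewrite n0 //.
  move: lt; rewrite /L big1 ?z // => j _; exact: z.
have [h1 _] := test (Ordinal npos).
lia.
Qed.
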